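(* The recurrence $x_n=x_{n-1}+x_{n-2}+2x_{n-3}$ is not congenial; that is, there is no finite bound $B$ such that for every positive integer $n$, either $t_{1,1,2}(n)=\infty$ or $t_{1,1,2}(n)\le B$.
   Context: For non-negative integers $a,b,c$, a positive $k$-element solution of the recurrence $x_i=ax_{i-1}+bx_{i-2}+cx_{i-3}$ is an integer sequence $\langle x_i\rangle_{i=1}^k$ satisfying the recurrence for $4\le i\le k$ with $x_1,x_2,x_3>0$; it terminates at $x_k$. For a positive integer $n$, $k_{a,b,c}(n)$ is the largest $k$ such that there is a positive $k$-element solution terminating at $n$, and $t_{a,b,c}(n)$ is the number of positive $k_{a,b,c}(n)$-element solutions terminating at $n$. The recurrence is congenial if there is a finite $B$ such that for all $n$, $t_{a,b,c}(n)=\infty$ or $t_{a,b,c}(n)\le B$. *)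

(* Defs.v *)
From mathcomp Require Import all_boot all_order all_algebra.
Set Implicit Arguments. Unset Strict Implicit. Unset Printing Implicit Defensive.
Import GRing.Theory Num.Theory.
Local Open Scope ring_scope.

(* A k-element sequence <x_1,...,x_k> is represented by s : seq int of size k,
   with x_(i+1) = nth 0 s i. *)

Definition pos_solution (a b c : nat) (s : seq int) : Prop :=
  (3 <= size s)%N /\
  0 < nth 0 s 0 /\ 0 < nth 0 s 1 /\ 0 < nth 0 s 2 /\
  forall i : nat, (3 <= i < size s)%N ->
    nth 0 s i = a%:Z * nth 0 s (i - 1)%N + b%:Z * nth 0 s (i - 2)%N + c%:Z * nth 0 s (i - 3)%N.

Definition terminates_at (s : seq int) (n : nat) : Prop :=
  nth 0 s (size s).-1 = n%:Z.

(* solutions counted by t_{a,b,c}(n) when k = k_{a,b,c}(n) *)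
Definition sol_kn (a b c n k : nat) (s : seq int) : Prop :=
  pos_solution a b c s /\ size s = k /\ terminates_at s n.

Definition is_k (a b c n k : nat) : Prop :=
  (exists s, sol_kn a b c n k s) /\
  forall s, pos_solution a b c s -> terminates_at s n -> (size s <= k)%N.

Definition t_infinite (a b c n k : nat) : Prop :=
  forall l : seq (seq int), exists s, sol_kn a b c n k s /\ s \notin l.

Definition t_le (a b c n k B : nat) : Prop :=
  exists l : seq (seq int), (size l <= B)%N /\
    forall s, sol_kn a b c n k s -> s \in l.

Definition congenial (a b c : nat) : Prop :=
  exists B : nat, forall n : nat, (0 < n)%N -> forall k : nat, is_k a b c n k ->
    t_infinite a b c n k \/ t_le a b c n k B.

(* Main.v *)
Require Import Defs.
From mathcomp Require Import all_boot all_order all_algebra.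
From mathcomp Require Import zify.
Import GRing.Theory Num.Theory.
Local Open Scope ring_scope.

Definition X (s : seq int) i := nth 0 s i.
Definition Ssum s := X s 0 + X s 1 + X s 2.
Definition Z s i := 7 * X s i - 2^+i * Ssum s.

Lemma rec3 s i : pos_solution 1 1 2 s -> (i+3 < size s)%N ->
  X s (i+3) = X s (i+2) + X s (i+1) + 2 * X s i.
Proof.
move=> [_ [_ [_ [_ H]]]] Hi.
rewrite /X (H (i+3)%N); last by apply/andP; split; [rewrite leq_addl|].
rewrite addnK.
have -> : (i + 3 - 1 = i + 2)%N by lia.
have -> : (i + 3 - 2 = i + 1)%N by lia.
by rewrite !mul1r.
Qed.

Lemma Zsum s i : pos_solution 1 1 2 s -> (i+2 < size s)%N ->
  Z s i + Z s (i+1) + Z s (i+2) = 0.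
Proof.
move=> Hs; elim: i => [|i IH] Hi.
  rewrite /Z /Ssum /= expr0 expr1 exprS expr1. lia.
have Hi' : (i + 2 < size s)%N by lia.
have := IH Hi'.
rewrite /Z.
have -> : (i.+1 + 1 = i + 2)%N by lia.
have -> : (i.+1 + 2 = i + 3)%N by lia.
have -> : (i.+1 = i + 1)%N by lia.
rewrite (rec3 _ _ Hs); last by lia.
rewrite !exprD.
set P := 2^+i. set T := Ssum s.
idtac.
lia.
Qed.


Lemma Zper s i : pos_solution 1 1 2 s -> (i+3 < size s)%N -> Z s (i+3) = Z s i.
Proof.
move=> Hs Hi.
have h1 := Zsum _ i Hs (_ : (i + 2 < size s)%N).
have h2 := Zsum _ (i+1) Hs (_ : (i + 1 + 2 < size s)%N).
have e1 : (i + 1 + 1 = i + 2)%N by lia.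
have e2 : (i + 1 + 2 = i + 3)%N by lia.
rewrite e1 e2 in h2.
have := h1 ltac:(lia); have := h2 ltac:(lia). lia.
Qed.

Lemma Xpos s i : pos_solution 1 1 2 s -> (i < size s)%N -> 0 < X s i.
Proof.
move=> Hs; elim/ltn_ind: i => i IH Hi.
have [h3 [p0 [p1 [p2 _]]]] := Hs.
case: i IH Hi => [|[|[|i]]] IH Hi //.
have -> : i.+3 = (i + 3)%N by lia.
rewrite (rec3 _ _ Hs); last by lia.
have := IH i ltac:(lia) ltac:(lia).
have := IH (i+1)%N ltac:(lia) ltac:(lia).
have := IH (i+2)%N ltac:(lia) ltac:(lia).
lia.
Qed.

Lemma Zbound s i : pos_solution 1 1 2 s -> (i < size s)%N ->
  - 4 * Ssum s < Z s i < 7 * Ssum s.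
Proof.
move=> Hs; elim/ltn_ind: i => i IH Hi.
have [h3 [p0 [p1 [p2 _]]]] := Hs.
have q0 : 0 < X s 0 := p0. have q1 : 0 < X s 1 := p1. have q2 : 0 < X s 2 := p2.
case: i IH Hi => [|[|[|i]]] IH Hi.
- rewrite /Z /Ssum expr0; apply/andP; split; lia.
- rewrite /Z /Ssum expr1; apply/andP; split; lia.
- rewrite /Z /Ssum !exprS expr0; apply/andP; split; lia.
have -> : i.+3 = (i + 3)%N by lia.
rewrite Zper //; last by lia.
apply: IH; lia.
Qed.

Lemma Z3q s q : pos_solution 1 1 2 s -> (3 * q < size s)%N -> Z s (3 * q) = Z s 0.
Proof.
move=> Hs; elim: q => [|q IH] Hq; first by [].
have -> : (3 * q.+1 = 3 * q + 3)%N by lia.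
rewrite Zper //; last by lia.
apply: IH; lia.
Qed.

Lemma key (P S S' Z1 Z2 h : int) : 0 < S' -> S = 2 * h + 1 -> 0 <= h ->
  11 * S <= P -> P * S + Z1 = 2 * P * S' + Z2 ->
  - 4 * S < Z1 < 7 * S -> - 4 * S' < Z2 < 7 * S' -> False.
Proof.
move=> HS' HS Hh HP E B1 B2.
have [D|D] : (1 <= S - 2 * S') \/ (S - 2 * S' <= -1) by lia.
- have : P <= P * (S - 2 * S') by nia.
  nia.
- have : 11 * S * (2 * S' - S) <= P * (2 * S' - S) by nia.
  nia.
Qed.

Lemma drop_sol s d : pos_solution 1 1 2 s -> (d + 3 <= size s)%N ->
  pos_solution 1 1 2 (drop d s).
Proof.
move=> Hs Hd.
have [h3 [p0 [p1 [p2 H]]]] := Hs.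
split; first by rewrite size_drop; lia.
rewrite !nth_drop.
split; first exact: (Xpos _ (d+0)%N Hs ltac:(lia)).
split; first exact: (Xpos _ (d+1)%N Hs ltac:(lia)).
split; first exact: (Xpos _ (d+2)%N Hs ltac:(lia)).
move=> i /andP [Hi1 Hi2]; rewrite size_drop in Hi2.
rewrite !nth_drop H; last by apply/andP; split; lia.
have -> : (d + i - 1 = d + (i - 1))%N by lia.
have -> : (d + i - 2 = d + (i - 2))%N by lia.
have -> : (d + i - 3 = d + (i - 3))%N by lia.
by [].
Qed.

Lemma drop_term s d n : (d < size s)%N -> terminates_at s n -> terminates_at (drop d s) n.
Proof.
move=> Hd; rewrite /terminates_at nth_drop size_drop.
have -> : (d + (size s - d).-1 = (size s).-1)%N by lia.
by [].
Qed.

Fixpoint g (a b c : int) (i : nat) : int * int * int :=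
  match i with
  | 0 => (a, b, c)
  | i'.+1 => let t := g a b c i' in (t.1.2, t.2, t.2 + t.1.2 + 2 * t.1.1)
  end.
Definition f a b c i := (g a b c i).1.1.

Lemma g_spec a b c i : g a b c i = (f a b c i, f a b c i.+1, f a b c i.+2).
Proof.
rewrite /f; elim: i => [|i IH] //=; by rewrite IH.
Qed.

Lemma f_rec a b c i : f a b c i.+3 = f a b c i.+2 + f a b c i.+1 + 2 * f a b c i.
Proof.
by rewrite {1}/f /= g_spec /=.
Qed.

Lemma gen_sol a b c L : 0 < a -> 0 < b -> 0 < c -> (3 <= L)%N ->
  pos_solution 1 1 2 (mkseq (f a b c) L).
Proof.
move=> ha hb hc hL.
split; first by rewrite size_mkseq.
rewrite !nth_mkseq; try lia.
split=> //. split=> //. split=> //.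
move=> i /andP [Hi1 Hi2]; rewrite size_mkseq in Hi2.
rewrite !nth_mkseq; try lia.
have -> : i = (i - 3).+3 by lia.
have -> : ((i - 3).+3 - 1 = (i-3).+2)%N by lia.
have -> : ((i - 3).+3 - 2 = (i-3).+1)%N by lia.
have -> : ((i - 3).+3 - 3 = (i-3))%N by lia.
by rewrite f_rec !mul1r.
Qed.

Lemma sol_uniq s : pos_solution 1 1 2 s ->
  s = mkseq (f (X s 0) (X s 1) (X s 2)) (size s).
Proof.
move=> Hs.
apply: (@eq_from_nth _ 0); first by rewrite size_mkseq.
move=> i Hi; rewrite nth_mkseq //.
elim/ltn_ind: i Hi => i IH Hi.
case: i IH Hi => [|[|[|i]]] IH Hi //.
rewrite f_rec -!IH; try lia.
move: (rec3 _ i Hs); rewrite /X !addn3 !addn2 !addn1 => E; exact: E.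
Qed.

Lemma pow_gt k : Posz k < (2:int)^+k.
Proof.
elim: k => [|k IH]; first by rewrite expr0.
rewrite exprS. have := exprn_ege1 k (_ : (1:int) <= 2). lia.
Qed.

Lemma f0 a b c : f a b c 0 = a. Proof. by []. Qed.
Lemma f1 a b c : f a b c 1 = b. Proof. by []. Qed.
Lemma f2 a b c : f a b c 2 = c. Proof. by []. Qed.

Lemma HP_lem S : 11 * Posz S <= (2:int)^+(3*(S+5)).
Proof.
have e : (3*(S+5) = S + (2*S + 11) + 4)%N by lia.
rewrite e !exprD.
have h2 := pow_gt S. have h1 := exprn_ege1 (2 * S + 11) (_ : (1:int) <= 2).
have -> : (2:int)^+4 = 16 by [].
have h3 : (1:int) <= 2 by [].
move: (h1 h3) h2. set a := 2^+S. set b := 2^+(2*S+11). nia.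
Qed.

Theorem lemma6 : ~ congenial 1 1 2.
Proof.
move=> [B HB].
pose S : nat := (2*B+3)%N.
have HS : S = (2*B+3)%N by [].
clearbody S.
pose m : nat := (3*(S+5))%N.
have Hm : m = (3*(S+5))%N by [].
clearbody m.
pose sj (j:nat) := mkseq (f 1 (Posz j + 1) (Posz S - 2 - Posz j)) m.+1.
have sj_sol j : (j < S - 2)%N -> pos_solution 1 1 2 (sj j).
  move=> hj; apply: gen_sol; lia.
have sj_X j i : (i <= m)%N -> X (sj j) i = f 1 (Posz j + 1) (Posz S - 2 - Posz j) i.
  by move=> hi; rewrite /X /sj nth_mkseq.
have sj_S j : Ssum (sj j) = Posz S.
  rewrite /Ssum !sj_X ?f0 ?f1 ?f2; lia.
have sj_Z j : (j < S - 2)%N -> Z (sj j) m = 7 - Posz S.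
  move=> hj; rewrite Hm Z3q; last first.
  - by rewrite /sj size_mkseq -Hm.
  - exact: sj_sol.
  rewrite /Z sj_S sj_X ?f0 ?expr0; lia.
have HP : 11 * Posz S <= 2^+m by rewrite Hm; apply: HP_lem.
have sj_last j : (j < S - 2)%N -> 7 * X (sj j) m = 2^+m * Posz S + 7 - Posz S.
  move=> hj; have := sj_Z j hj; rewrite /Z sj_S; lia.
pose v := X (sj 0) m.
have vpos : 0 < v by apply: Xpos; [apply: sj_sol; lia | rewrite /sj size_mkseq].
pose n := `|v|%N.
have nZ : Posz n = v by rewrite /n abszE gtr0_norm.
have Hn : (0 < n)%N by lia.
have sj_term j : (j < S - 2)%N -> sol_kn 1 1 2 n m.+1 (sj j).
  move=> hj; split; first exact: sj_sol.
  split; first by rewrite /sj size_mkseq.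
  rewrite /terminates_at /sj size_mkseq /= nZ.
  change (X (sj j) m = v).
  have := sj_last j hj; have := sj_last 0%N ltac:(lia). rewrite -/v. lia.
have Hk : is_k 1 1 2 n m.+1.
  split; first by exists (sj 0%N); apply: sj_term; lia.
  move=> s Hs Ht; rewrite leqNgt; apply/negP => Hlt.
  pose d := (size s - m.+2)%N.
  have Hd : d = (size s - m.+2)%N by [].
  clearbody d.
  have Hs' := drop_sol _ d Hs ltac:(lia).
  have Ht' : terminates_at (drop d s) n by apply: drop_term => //; lia.
  have Hsz : size (drop d s) = m.+2 by rewrite size_drop; lia.
  have E' : 7 * Posz n = 2^+(m.+1) * Ssum (drop d s) + Z (drop d s) m.+1.
    have Xl : X (drop d s) m.+1 = Posz n by move: Ht'; rewrite /terminates_at Hsz.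
    rewrite /Z Xl; lia.
  have Bd := Zbound _ m.+1 Hs' ltac:(lia).
  have q0 := Xpos _ 0 Hs' ltac:(lia).
  have q1 := Xpos _ 1 Hs' ltac:(lia).
  have q2 := Xpos _ 2 Hs' ltac:(lia).
  have E : 7 * Posz n = 2^+m * Posz S + (7 - Posz S) by rewrite nZ /v sj_last; lia.
  apply: (@key (2^+m) (Posz S) (Ssum (drop d s)) (7 - Posz S) (Z (drop d s) m.+1) (Posz B + 1)).
  - rewrite /Ssum; lia.
  - lia.
  - lia.
  - exact: HP.
  - rewrite -E E' exprS; lia.
  - apply/andP; split; lia.
  - exact: Bd.
case: (HB n Hn m.+1 Hk).
- move=> Hinf.
  pose N := (7 * n)%N.
  pose l := [seq mkseq (f (Posz (nat_of_ord t.1.1)) (Posz (nat_of_ord t.1.2)) (Posz (nat_of_ord t.2))) m.+1 | t : 'I_N * 'I_N * 'I_N <- enum {: 'I_N * 'I_N * 'I_N}].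
  have [s [[Hs [Hsz Ht]] Hnot]] := Hinf l.
  move/negP: Hnot; apply.
  have E : 7 * Posz n = 2^+m * Ssum s + Z s m.
    have Xl : X s m = Posz n by move: Ht; rewrite /terminates_at Hsz.
    rewrite /Z Xl; lia.
  have Bd := Zbound _ m Hs ltac:(lia).
  have q0 := Xpos _ 0 Hs ltac:(lia).
  have q1 := Xpos _ 1 Hs ltac:(lia).
  have q2 := Xpos _ 2 Hs ltac:(lia).
  have Hlt : Ssum s < 7 * Posz n by rewrite /Ssum in Bd E *; nia.
  have ha : (`|X s 0| < N)%N by rewrite /Ssum in Hlt; lia.
  have hb : (`|X s 1| < N)%N by rewrite /Ssum in Hlt; lia.
  have hc : (`|X s 2| < N)%N by rewrite /Ssum in Hlt; lia.
  apply/mapP; exists (Ordinal ha, Ordinal hb, Ordinal hc); first by rewrite mem_enum.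
  rewrite {1}(sol_uniq _ Hs) Hsz /=.
  rewrite !abszE !gtr0_norm //.
- move=> [l [Hl Hall]].
  have U : uniq [seq sj j | j <- iota 0 (S - 2)].
    rewrite map_inj_in_uniq ?iota_uniq // => j1 j2 _ _ E.
    have := congr1 (fun s => X s 1) E; rewrite !sj_X ?f1; try lia.
  have Hsub : {subset [seq sj j | j <- iota 0 (S - 2)] <= l}.
    move=> s /mapP [j Hj ->]; apply: Hall; apply: sj_term.
    by rewrite mem_iota in Hj; lia.
  have := uniq_leq_size U Hsub.
  move=> h; have := leq_trans h Hl; rewrite size_map size_iota; lia.
Qed.
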